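(* Let $p<q$ be positive integers, let $\boldsymbol\alpha\in\mathbb C^p$ be a unit vector, $\boldsymbol\beta=\mathrm{FT}_p(\boldsymbol\alpha)$ and $\boldsymbol\gamma=\mathrm{FT}_q(\boldsymbol\alpha)$. Let $S\subseteq[p]$, let $0<\delta\le 1$ and $r>0$. Suppose that $\boldsymbol\beta_S$ is $\delta$-uniform and $\|\boldsymbol\beta_S\|_2^2=c$. Then if $q>\left(\frac{3200\,r\ln p}{\delta\sqrt c}\right)p$, $$\|\boldsymbol\gamma_{S'}\|_2^2\geq \frac{p}{q}\,\delta^2\left(1-\frac{1}{100r}\right)c .$$
   Context: Write $[N]=\{0,\dots,N-1\}$ and $\omega_N=e^{2\pi i/N}$. For $N\ge p$, $\mathrm{FT}_N(\boldsymbol\alpha)=\sum_{c=0}^{N-1}\left(\frac{1}{\sqrt N}\sum_{i=0}^{p-1}\omega_N^{ic}\alpha_i\right)|c\rangle\in\mathbb C^N$. Write $\boldsymbol\beta=(\beta_i)_{i\in[p]}$, $\boldsymbol\gamma=(\gamma_i)_{i\in[q]}$. For $i\in[p]$, $i'=\lfloor\frac qp i\rfloor$, and $S'=\{s':s\in S\}\subseteq[q]$. For a vector $\boldsymbol\zeta$ and an index set $T$, $\boldsymbol\zeta_T$ is the vector agreeing with $\boldsymbol\zeta$ on indices in $T$ and zero elsewhere. $\|\cdot\|_2$ is the Euclidean norm. A vector $\boldsymbol\zeta$ is $\delta$-uniform if for all $i,j$ with $\zeta_i,\zeta_j$ both nonzero, $\delta\le |\zeta_i|/|\zeta_j|\le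 1/\delta$. *)

(* Defs.v *)
From Stdlib Require Import Reals Lra Lia List.
From Coquelicot Require Import Coquelicot.
Open Scope R_scope.

Fixpoint csum (f : nat -> C) (n : nat) : C :=
  match n with
  | O => RtoC 0
  | S m => Cplus (csum f m) (f m)
  end.

Fixpoint rsum (f : nat -> R) (n : nat) : R :=
  match n with
  | O => 0
  | S m => rsum f m + f m
  end.

Definition omega_pow (N k : nat) : C :=
  (cos (2 * PI * INR k / INR N), sin (2 * PI * INR k / INR N)).

(* FT_N(alpha), alpha in C^p (entries alpha 0 .. alpha (p-1)), result in C^N:
   component c equals (1/sqrt N) sum_{i<p} omega_N^{i c} alpha_i. *)
Definition FT (p N : nat) (alpha : nat -> C) : nat -> C :=
  fun c => Cmult (RtoC (/ sqrt (INR N)))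
                 (csum (fun i => Cmult (omega_pow N (i * c)) (alpha i)) p).

Definition restrict (zeta : nat -> C) (T : nat -> bool) : nat -> C :=
  fun i => if T i then zeta i else RtoC 0.

Definition norm2 (n : nat) (zeta : nat -> C) : R :=
  sqrt (rsum (fun i => (Cmod (zeta i)) ^ 2) n).

Definition delta_uniform (n : nat) (delta : R) (zeta : nat -> C) : Prop :=
  forall i j, (i < n)%nat -> (j < n)%nat ->
    zeta i <> RtoC 0 -> zeta j <> RtoC 0 ->
    delta <= Cmod (zeta i) / Cmod (zeta j) <= / delta.

Definition prime_idx (p q i : nat) : nat := (q * i / p)%nat.

Definition image_set (p q : nat) (S : nat -> bool) : nat -> bool :=
  fun j => existsb (fun i => andb (S i) (Nat.eqb j (prime_idx p q i))) (seq 0 p).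

(* Main.v *)
Require Import Defs.
From Stdlib Require Import Reals.
From Coquelicot Require Import Coquelicot.
From Stdlib Require Import Lra Lia List ZArith.
Open Scope R_scope.

Lemma rsum_ext f g n : (forall i, (i < n)%nat -> f i = g i) -> rsum f n = rsum g n.
Proof. induction n; simpl; intros H; auto. rewrite IHn by (intros; apply H; lia). rewrite H by lia; auto. Qed.

Lemma rsum_le f g n : (forall i, (i < n)%nat -> f i <= g i) -> rsum f n <= rsum g n.
Proof. induction n; simpl; intros H; [lra|]. specialize (IHn (fun i Hi => H i ltac:(lia))). specialize (H n ltac:(lia)). lra. Qed.

Lemma rsum_nonneg f n : (forall i, (i < n)%nat -> 0 <= f i) -> 0 <= rsum f n.
Proof. intros H. replace 0 with (rsum (fun _ => 0) n). apply rsum_le; auto. induction n; simpl; auto. rewrite IHn; [lra|]. intros; apply H; lia. Qed.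

Lemma rsum_mono f m n : (forall i, 0 <= f i) -> (m <= n)%nat -> rsum f m <= rsum f n.
Proof. intros H Hmn. induction Hmn; [lra|]. simpl. specialize (H m0). lra. Qed.

Lemma rsum_plus f g n : rsum (fun i => f i + g i) n = rsum f n + rsum g n.
Proof. induction n; simpl; [lra|]. rewrite IHn; lra. Qed.

Lemma rsum_scal a f n : rsum (fun i => a * f i) n = a * rsum f n.
Proof. induction n; simpl; [lra|]. rewrite IHn; lra. Qed.

Lemma rsum_swap (f : nat -> nat -> R) n m :
  rsum (fun i => rsum (fun j => f i j) m) n = rsum (fun j => rsum (fun i => f i j) n) m.
Proof. induction n; simpl. { induction m; simpl; auto. rewrite <- IHm; lra. }
  rewrite IHn. rewrite <- rsum_plus. auto. Qed.

Lemma rsum_CS x n : (rsum x n) ^ 2 <= INR n * rsum (fun i => x i ^ 2) n.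
Proof.
  induction n. simpl; lra.
  rewrite S_INR. cbn [rsum].
  set (s := rsum x n) in *. set (t := rsum (fun i => x i ^ 2) n) in *.
  assert (Ht : 0 <= t) by (apply rsum_nonneg; intros; nra).
  assert (INR n = 0 \/ 0 < INR n) as [H0|H0] by (pose proof (pos_INR n); lra).
  - rewrite H0 in IHn. assert (s = 0) by nra. rewrite H, H0. nra.
  - assert (2 * s * x n <= t + INR n * x n ^2).
    { assert (INR n * (t + INR n * x n ^2) >= INR n * (2 * s * x n)) by (pose proof (pow2_ge_0 (s - INR n * x n)); nra). nra. }
    nra.
Qed.

Lemma csum_ext f g n : (forall i, (i < n)%nat -> f i = g i) -> csum f n = csum g n.
Proof. induction n; simpl; intros H; auto. rewrite IHn by (intros; apply H; lia). rewrite H by lia; auto. Qed.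

Lemma csum_plus f g n : csum (fun i => f i + g i)%C n = (csum f n + csum g n)%C.
Proof. induction n; simpl. apply injective_projections; simpl; lra. rewrite IHn; ring. Qed.

Lemma csum_scal a f n : csum (fun i => a * f i)%C n = (a * csum f n)%C.
Proof. induction n; simpl. apply injective_projections; simpl; lra. rewrite IHn; ring. Qed.

Lemma csum_scalr a f n : csum (fun i => f i * a)%C n = (csum f n * a)%C.
Proof. induction n; simpl. apply injective_projections; simpl; lra. rewrite IHn; ring. Qed.

Lemma csum_swap (f : nat -> nat -> C) n m :
  csum (fun i => csum (fun j => f i j) m) n = csum (fun j => csum (fun i => f i j) n) m.
Proof. induction n; simpl. { induction m; simpl; auto. rewrite <- IHm. apply injective_projections; simpl; lra. }
  rewrite IHn. rewrite <- csum_plus. auto. Qed.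

Lemma csum_conj f n : Cconj (csum f n) = csum (fun i => Cconj (f i)) n.
Proof. induction n; simpl. apply injective_projections; simpl; lra. rewrite <- IHn.
  apply injective_projections; simpl; lra. Qed.

Lemma csum_RtoC f n : RtoC (rsum f n) = csum (fun i => RtoC (f i)) n.
Proof. induction n; simpl; auto. rewrite <- IHn. apply injective_projections; simpl; lra. Qed.

Lemma csum_zero n : csum (fun _ => RtoC 0) n = RtoC 0.
Proof. induction n; simpl; auto. rewrite IHn. apply injective_projections; simpl; lra. Qed.

Lemma csum_delta (f : nat -> C) k n : (k < n)%nat ->
  csum (fun l => if Nat.eqb k l then f l else RtoC 0) n = f k.
Proof. induction n; intros H; [lia|]. simpl. destruct (Nat.eqb_spec k n).
  - subst. rewrite (csum_ext _ (fun _ => RtoC 0)). rewrite csum_zero. ring.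
    intros i Hi. destruct (Nat.eqb_spec n i); auto; lia.
  - rewrite IHn by lia. ring. Qed.

Lemma csum_telescope (f : nat -> C) n : csum (fun j => f (S j) - f j)%C n = (f n - f O)%C.
Proof. induction n; simpl. ring. rewrite IHn. ring. Qed.

Lemma Cmod_csum f n : Cmod (csum f n) <= rsum (fun i => Cmod (f i)) n.
Proof. induction n; simpl. rewrite Cmod_0; lra. eapply Rle_trans. apply Cmod_triangle. lra. Qed.

Lemma csum_mult f g n m : (csum f n * csum g m)%C = csum (fun k => csum (fun l => f k * g l) m)%C n.
Proof. rewrite <- csum_scalr. apply csum_ext. intros. rewrite <- csum_scal. auto. Qed.

Definition E (x : R) : C := (cos (2 * PI * x), sin (2 * PI * x)).

Lemma E_add x y : (E x * E y)%C = E (x + y).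
Proof. unfold E, Cmult; apply injective_projections; simpl;
  replace (2 * PI * (x + y)) with (2 * PI * x + 2 * PI * y) by ring;
  [rewrite cos_plus | rewrite sin_plus]; ring. Qed.

Lemma E_conj x : Cconj (E x) = E (- x).
Proof. unfold E, Cconj; apply injective_projections; simpl;
  replace (2 * PI * - x) with (- (2 * PI * x)) by ring;
  [rewrite cos_neg | rewrite sin_neg]; ring. Qed.

Lemma Cmod_E x : Cmod (E x) = 1.
Proof. unfold Cmod, E; simpl. pose proof (sin2_cos2 (2 * PI * x)) as H. unfold Rsqr in H. replace (_ + _) with 1. apply sqrt_1. nra. Qed.


Lemma E_0 : E 0 = RtoC 1.
Proof. unfold E. rewrite Rmult_0_r, cos_0, sin_0. auto. Qed.

Lemma E_nat n : E (INR n) = RtoC 1.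
Proof. unfold E. replace (2 * PI * INR n) with (0 + 2 * INR n * PI) by ring.
  rewrite cos_period, sin_period, cos_0, sin_0. auto. Qed.

Lemma E_diff k l : E (INR k - INR l) = RtoC 1.
Proof. destruct (le_lt_dec l k).
  - rewrite <- minus_INR by auto. apply E_nat.
  - replace (INR k - INR l) with (- (INR l - INR k)) by ring.
    rewrite <- E_conj, <- minus_INR by lia. rewrite E_nat.
    apply injective_projections; simpl; lra. Qed.

Lemma E_ne1 (d p : nat) k l : (0 < p)%nat -> (k < p)%nat -> (l < p)%nat -> k <> l ->
  E ((INR k - INR l) / INR p) <> RtoC 1.
Proof.
  intros Hp Hk Hl Hkl HE.
  assert (Hs : sin (2 * PI * ((INR k - INR l) / INR p)) = 0) by (apply (f_equal snd) in HE; exact HE).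
  assert (Hc : cos (2 * PI * ((INR k - INR l) / INR p)) = 1) by (apply (f_equal fst) in HE; exact HE).
  apply sin_eq_0_0 in Hs. destruct Hs as [m Hm].
  assert (HP : 0 < INR p) by (apply lt_0_INR; auto).
  assert (Hk' : INR k < INR p) by (apply lt_INR; auto).
  assert (Hl' : INR l < INR p) by (apply lt_INR; auto).
  pose proof (pos_INR k). pose proof (pos_INR l).
  assert (Hne : INR k <> INR l) by (intro; apply Hkl; apply INR_eq; auto).
  pose proof PI_RGT_0.
  assert (Hm2 : 2 * (INR k - INR l) = IZR m * INR p).
  { apply (Rmult_eq_reg_r PI); [|lra]. replace (2 * (INR k - INR l) * PI) with (2 * PI * ((INR k - INR l) / INR p) * INR p) by (field; lra). rewrite Hm. ring. }
  assert (Ha : IZR m < 2) by nra. assert (Hb : -2 < IZR m) by nra.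
  assert (Hc0 : IZR m <> 0) by (intro Hz; rewrite Hz in Hm2; lra).
  apply lt_IZR in Ha. apply lt_IZR in Hb. assert (m <> 0%Z) by (intro; subst; auto).
  assert (m = 1%Z \/ m = (-1)%Z) as [->| ->] by lia; rewrite Hm in Hc.
  - rewrite Rmult_1_l, cos_PI in Hc. lra.
  - replace (IZR (-1) * PI) with (- PI) in Hc by (simpl; ring). rewrite cos_neg, cos_PI in Hc; lra.
Qed.

Lemma geom x n : ((E x - RtoC 1) * csum (fun i => E (x * INR i)) n)%C = (E (x * INR n) - RtoC 1)%C.
Proof. induction n. cbn [csum INR]. rewrite Rmult_0_r, E_0. ring.
  cbn [csum]. rewrite Cmult_plus_distr_l, IHn. rewrite S_INR.
  replace (x * (INR n + 1)) with (x + x * INR n) by ring. rewrite <- E_add. ring. Qed.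

Lemma orth p k l : (0 < p)%nat -> (k < p)%nat -> (l < p)%nat ->
  csum (fun i => E (INR k * INR i / INR p) * Cconj (E (INR l * INR i / INR p)))%C p
  = if Nat.eqb k l then RtoC (INR p) else RtoC 0.
Proof.
  intros Hp Hk Hl.
  assert (HP : INR p <> 0) by (apply not_0_INR; lia).
  rewrite (csum_ext _ (fun i => E ((INR k - INR l) / INR p * INR i))).
  2:{ intros i Hi. rewrite E_conj, E_add. f_equal. field. auto. }
  destruct (Nat.eqb_spec k l).
  - subst. rewrite (csum_ext _ (fun _ => RtoC 1)).
    { clear. induction p; simpl; auto. rewrite IHp. destruct p; simpl; apply injective_projections; simpl; lra. }
    intros. replace ((INR l - INR l) / INR p * INR i) with 0 by (field; auto). apply E_0.
  - assert (Hg := geom ((INR k - INR l) / INR p) p).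
    replace ((INR k - INR l) / INR p * INR p) with (INR k - INR l) in Hg by (field; auto).
    rewrite E_diff in Hg. replace (RtoC 1 - RtoC 1)%C with (RtoC 0) in Hg by ring.
    apply (f_equal Cmod) in Hg. rewrite Cmod_mult, Cmod_0 in Hg.
    apply Rmult_integral in Hg. destruct Hg as [Hg|Hg]; apply Cmod_eq_0 in Hg; auto.
    exfalso. apply (E_ne1 O p k l); auto. 
    replace (E ((INR k - INR l) / INR p)) with ((E ((INR k - INR l) / INR p) - RtoC 1) + RtoC 1)%C by ring.
    rewrite Hg. ring.
Qed.

Lemma RtoC_inj x y : RtoC x = RtoC y -> x = y.
Proof. intros H. apply (f_equal fst) in H. exact H. Qed.

Lemma parseval p (a : nat -> C) : (0 < p)%nat ->
  rsum (fun i => Cmod (csum (fun k => E (INR k * INR i / INR p) * a k)%C p) ^ 2) p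
  = INR p * rsum (fun k => Cmod (a k) ^ 2) p.
Proof.
  intros Hp. apply RtoC_inj. rewrite csum_RtoC.
  rewrite (csum_ext _ (fun i => csum (fun k => csum (fun l =>
     (a k * Cconj (a l)) * (E (INR k * INR i / INR p) * Cconj (E (INR l * INR i / INR p))))%C p) p)).
  2:{ intros i Hi. rewrite Cmod2_conj. rewrite csum_conj, csum_mult. apply csum_ext; intros k Hk.
      apply csum_ext; intros l Hl. rewrite Cmult_conj. ring. }
  rewrite csum_swap.
  rewrite (csum_ext _ (fun k => csum (fun l => if Nat.eqb k l then (a l * Cconj (a l) * RtoC (INR p))%C else RtoC 0) p)).
  2:{ intros k Hk. rewrite csum_swap. apply csum_ext; intros l Hl.
      rewrite csum_scal, orth by auto. destruct (Nat.eqb_spec k l); [subst; auto| ring]. }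
  rewrite (csum_ext _ (fun k => (a k * Cconj (a k) * RtoC (INR p))%C)).
  2:{ intros k Hk. rewrite (csum_delta (fun l => (a l * Cconj (a l) * RtoC (INR p))%C)); auto. }
  rewrite RtoC_mult, csum_RtoC, <- csum_scal. apply csum_ext. intros k Hk.
  rewrite Cmod2_conj. ring.
Qed.

Lemma sin_sq_le y : sin y ^ 2 <= y ^ 2.
Proof.
  pose proof (SIN_bound y). pose proof PI_RGT_0. pose proof PI2_1.
  destruct (Rle_dec 1 (Rabs y)).
  - assert (1 <= y ^ 2). { unfold Rabs in r; destruct (Rcase_abs y); nra. }
    nra.
  - apply Rnot_le_lt in n. apply Rabs_def2 in n. destruct n.
    destruct (Rtotal_order y 0) as [Hy|[Hy|Hy]].
    + pose proof (sin_gt_x y Hy). assert (Hs : 0 < sin (- y)) by (apply sin_gt_0; lra).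
      rewrite sin_neg in Hs. nra.
    + subst. rewrite sin_0. nra.
    + assert (0 < sin y) by (apply sin_gt_0; lra). pose proof (sin_gt_x (- y) ltac:(lra)) as Hs.
      rewrite sin_neg in Hs. nra.
Qed.

Lemma Cmod_E_sub1 x : Cmod (E x - RtoC 1)%C <= 2 * PI * Rabs x.
Proof.
  pose proof PI_RGT_0.
  replace (2 * PI * Rabs x) with (Rabs (2 * PI * x)) by (rewrite !Rabs_mult, (Rabs_right 2), (Rabs_right PI); lra).
  set (t := 2 * PI * x).
  unfold Cmod, E; simpl. fold t. rewrite <- sqrt_Rsqr_abs. apply sqrt_le_1_alt.
  replace t with (2 * (t / 2)) by field.
  rewrite cos_2a_sin, sin_2a. pose proof (sin_sq_le (t/2)). pose proof (sin2_cos2 (t/2)). unfold Rsqr in *.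
  set (s := sin (t/2)) in *. set (c := cos (t/2)) in *.
  match goal with |- ?L <= _ => replace L with (4 * s ^ 2 * (s * s + c * c)) by ring end.
  rewrite H1. nra.
Qed.

Definition h p q (alpha : nat -> C) i j : C :=
  (RtoC (/ sqrt (INR p)) * csum (fun k => E (INR k * INR i / INR p - INR k * INR j / (INR p * INR q)) * alpha k) p)%C.

Lemma Cmod_sq_scal (a : R) z : Cmod (RtoC a * z)%C ^ 2 = a ^ 2 * Cmod z ^ 2.
Proof. rewrite Cmod_mult, Cmod_R, Rpow_mult_distr, pow2_abs. auto. Qed.

Lemma csum_minus f g n : csum (fun i => f i - g i)%C n = (csum f n - csum g n)%C.
Proof. induction n; simpl. apply injective_projections; simpl; lra. rewrite IHn; ring. Qed.

Lemma d_sum p q alpha j : (0 < p)%nat -> (0 < q)%nat -> rsum (fun k => Cmod (alpha k) ^ 2) p = 1 ->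
  rsum (fun i => Cmod (h p q alpha i (S j) - h p q alpha i j)%C ^ 2) p <= (2 * PI / INR q) ^ 2.
Proof.
  intros Hp Hq Ha.
  assert (HP : 0 < INR p) by (apply lt_0_INR; auto).
  assert (HQ : 0 < INR q) by (apply lt_0_INR; auto).
  pose proof PI_RGT_0.
  set (a := fun k => ((E (- (INR k * INR (S j)) / (INR p * INR q)) - E (- (INR k * INR j) / (INR p * INR q))) * alpha k)%C).
  rewrite (rsum_ext _ (fun i => / INR p * Cmod (csum (fun k => E (INR k * INR i / INR p) * a k)%C p) ^ 2)).
  2:{ intros i Hi.
      assert (Heq : (h p q alpha i (S j) - h p q alpha i j = RtoC (/ sqrt (INR p)) * csum (fun k => E (INR k * INR i / INR p) * a k) p)%C).
      { unfold h. rewrite (csum_ext (fun k => E (INR k * INR i / INR p) * a k)%C (fun k => E (INR k * INR i / INR p - INR k * INR (S j) / (INR p * INR q)) * alpha k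
           - E (INR k * INR i / INR p - INR k * INR j / (INR p * INR q)) * alpha k)%C).
        2:{ intros k Hk. unfold a. 
            replace (E (INR k * INR i / INR p) * ((E (- (INR k * INR (S j)) / (INR p * INR q)) - E (- (INR k * INR j) / (INR p * INR q))) * alpha k))%C
            with ((E (INR k * INR i / INR p) * E (- (INR k * INR (S j)) / (INR p * INR q))) * alpha k - (E (INR k * INR i / INR p) * E (- (INR k * INR j) / (INR p * INR q))) * alpha k)%C by ring.
            rewrite !E_add. f_equal; f_equal; f_equal; unfold Rdiv; ring. }
        rewrite csum_minus. ring. }
      rewrite Heq, Cmod_sq_scal. f_equal.
      rewrite <- Rinv_pow by (apply Rgt_not_eq, sqrt_lt_R0; auto). rewrite pow2_sqrt by lra. auto. }
  rewrite rsum_scal, parseval by auto.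
  replace (/ INR p * (INR p * rsum (fun k => Cmod (a k) ^ 2) p)) with (rsum (fun k => Cmod (a k) ^ 2) p) by (field; lra).
  replace ((2 * PI / INR q) ^ 2) with ((2 * PI / INR q) ^ 2 * rsum (fun k => Cmod (alpha k) ^ 2) p) by (rewrite Ha; ring).
  rewrite <- rsum_scal. apply rsum_le. intros k Hk. unfold a.
  replace (E (- (INR k * INR (S j)) / (INR p * INR q))) with (E (- (INR k * INR j) / (INR p * INR q)) * E (- INR k / (INR p * INR q)))%C.
  2:{ rewrite E_add. f_equal. rewrite S_INR. field. lra. }
  replace (E (- (INR k * INR j) / (INR p * INR q)) * E (- INR k / (INR p * INR q)) - E (- (INR k * INR j) / (INR p * INR q)))%C
    with (E (- (INR k * INR j) / (INR p * INR q)) * (E (- INR k / (INR p * INR q)) - RtoC 1))%C by ring.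
  rewrite !Cmod_mult, Cmod_E, Rmult_1_l.
  assert (Hb : Cmod (E (- INR k / (INR p * INR q)) - RtoC 1)%C <= 2 * PI / INR q).
  { eapply Rle_trans. apply Cmod_E_sub1. 
    assert (INR k < INR p) by (apply lt_INR; auto). pose proof (pos_INR k).
    replace (Rabs (- INR k / (INR p * INR q))) with (INR k / (INR p * INR q)).
    2:{ replace (- INR k / (INR p * INR q)) with (- (INR k / (INR p*INR q))) by (field; lra). rewrite Rabs_Ropp, Rabs_right; auto. apply Rle_ge. apply Rmult_le_pos; auto. apply Rlt_le, Rinv_0_lt_compat; nra. }
    replace (2 * PI * (INR k / (INR p * INR q))) with (2 * PI / INR q * (INR k / INR p)) by (field; lra).
    rewrite <- (Rmult_1_r (2 * PI / INR q)) at 2. apply Rmult_le_compat_l.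
    apply Rlt_le, Rdiv_lt_0_compat; lra. apply Rlt_le. apply (Rmult_lt_reg_r (INR p)); auto. field_simplify; lra. }
  pose proof (Cmod_ge_0 (E (- INR k / (INR p * INR q)) - RtoC 1)%C). pose proof (Cmod_ge_0 (alpha k)).
  rewrite Rpow_mult_distr. apply Rmult_le_compat_r. nra. apply pow_incr. lra.
Qed.

Lemma rsum_const a n : rsum (fun _ => a) n = INR n * a.
Proof. induction n. simpl; ring. rewrite S_INR. cbn [rsum]. rewrite IHn. ring. Qed.

Lemma stepD p q alpha : (0 < p)%nat -> (p < q)%nat -> rsum (fun k => Cmod (alpha k) ^ 2) p = 1 ->
  rsum (fun i => Cmod (h p q alpha i ((q * i) mod p) - h p q alpha i 0)%C ^ 2) p
  <= ((INR p - 1) * (2 * PI / INR q)) ^ 2.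
Proof.
  intros Hp Hq Ha.
  assert (HP1 : INR (p - 1) = INR p - 1) by (rewrite minus_INR by lia; simpl; ring).
  assert (HP1' : 0 <= INR p - 1) by (rewrite <- HP1; apply pos_INR).
  set (d := fun i j => Cmod (h p q alpha i (S j) - h p q alpha i j)%C ^ 2).
  eapply Rle_trans with (rsum (fun i => (INR p - 1) * rsum (fun j => d i j) (p - 1)) p).
  - apply rsum_le. intros i Hi.
    set (m := ((q * i) mod p)%nat).
    assert (Hm : (m < p)%nat) by (apply Nat.mod_upper_bound; lia).
    rewrite <- (csum_telescope (h p q alpha i) m).
    set (R0 := rsum (fun j => Cmod (h p q alpha i (S j) - h p q alpha i j)%C) m).
    assert (H1 : Cmod (csum (fun j => h p q alpha i (S j) - h p q alpha i j)%C m) <= R0) by apply Cmod_csum.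
    assert (H2 := rsum_CS (fun j => Cmod (h p q alpha i (S j) - h p q alpha i j)%C) m). fold R0 in H2.
    pose proof (Cmod_ge_0 (csum (fun j => h p q alpha i (S j) - h p q alpha i j)%C m)).
    assert (H3 : rsum (fun j => Cmod (h p q alpha i (S j) - h p q alpha i j)%C ^ 2) m <= rsum (fun j => d i j) (p - 1)).
    { apply rsum_mono. intros; unfold d; apply pow2_ge_0. lia. }
    assert (H4 : INR m <= INR p - 1) by (rewrite <- HP1; apply le_INR; lia).
    assert (H5 : 0 <= rsum (fun j => Cmod (h p q alpha i (S j) - h p q alpha i j)%C ^ 2) m) by (apply rsum_nonneg; intros; apply pow2_ge_0).
    pose proof (pos_INR m).
    apply Rle_trans with (R0 ^ 2). apply pow_incr; lra.
    eapply Rle_trans. apply H2. apply Rmult_le_compat; auto.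
  - rewrite rsum_scal, rsum_swap.
    replace (((INR p - 1) * (2 * PI / INR q)) ^ 2) with ((INR p - 1) * rsum (fun _ => (2 * PI / INR q) ^ 2) (p - 1))
      by (rewrite rsum_const, HP1; ring).
    apply Rmult_le_compat_l; auto. apply rsum_le. intros j Hj. unfold d. apply d_sum; auto; lia.
Qed.

Lemma reindex (F : nat -> R) (phi : nat -> nat) : (forall j, 0 <= F j) ->
  (forall i, (phi i < phi (S i))%nat) -> forall n N, (forall i, (i < n)%nat -> (phi i < N)%nat) ->
  rsum (fun i => F (phi i)) n <= rsum F N.
Proof.
  intros HF Hphi.
  assert (Hmono : forall i d, (phi i < phi (S (i + d)))%nat).
  { intros i d. induction d. rewrite Nat.add_0_r; auto. specialize (Hphi (S (i + d))).
    replace (S (i + S d)) with (S (S (i + d))) by lia. lia. }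
  induction n; intros N HN. simpl. apply rsum_nonneg; auto.
  cbn [rsum]. eapply Rle_trans with (rsum F (phi n) + F (phi n)).
  - apply Rplus_le_compat_r. apply IHn. intros i Hi. replace n with (S (i + (n - i - 1))) by lia. apply Hmono.
  - change (rsum F (phi n) + F (phi n)) with (rsum F (S (phi n))). apply rsum_mono; auto. apply HN; lia.
Qed.

Lemma prime_idx_mono p q i : (0 < p)%nat -> (p <= q)%nat -> (prime_idx p q i < prime_idx p q (S i))%nat.
Proof.
  intros Hp Hq. unfold prime_idx.
  assert ((q * i + 1 * p) / p <= q * S i / p)%nat by (apply Nat.Div0.div_le_mono; lia).
  rewrite Nat.div_add in H by lia. lia.
Qed.

Lemma prime_idx_lt p q i : (0 < p)%nat -> (0 < q)%nat -> (i < p)%nat -> (prime_idx p q i < q)%nat.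
Proof. intros. unfold prime_idx. apply Nat.Div0.div_lt_upper_bound. nia. Qed.

Lemma image_set_true p q S i : (i < p)%nat -> S i = true -> image_set p q S (prime_idx p q i) = true.
Proof. intros Hi HS. unfold image_set. apply existsb_exists. exists i. split.
  apply in_seq; lia. rewrite HS, Nat.eqb_refl; auto. Qed.

Lemma omega_E N n : omega_pow N n = E (INR n / INR N).
Proof. unfold omega_pow, E. f_equal; f_equal; unfold Rdiv; ring. Qed.

Lemma beta_h p q alpha i : FT p p alpha i = h p q alpha i 0.
Proof. unfold FT, h. f_equal. apply csum_ext. intros k Hk. rewrite omega_E. f_equal. f_equal.
  rewrite mult_INR. simpl. unfold Rdiv. ring. Qed.

Lemma X_h p q alpha i : (0 < p)%nat -> (0 < q)%nat ->
  csum (fun k => omega_pow q (k * prime_idx p q i) * alpha k)%C p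
  = csum (fun k => E (INR k * INR i / INR p - INR k * INR ((q * i) mod p) / (INR p * INR q)) * alpha k)%C p.
Proof.
  intros Hp Hq. apply csum_ext. intros k Hk. rewrite omega_E. f_equal. f_equal.
  assert (HP : 0 < INR p) by (apply lt_0_INR; auto).
  assert (HQ : 0 < INR q) by (apply lt_0_INR; auto).
  pose proof (Nat.div_mod_eq (q * i) p) as Hd. apply (f_equal INR) in Hd.
  rewrite plus_INR, !mult_INR in Hd. unfold prime_idx. rewrite mult_INR.
  replace (INR ((q * i) mod p)) with (INR q * INR i - INR p * INR (q * i / p)) by lra.
  field. lra.
Qed.

Lemma pt (a b : C) t : 0 < t -> t <= 1 ->
  (1 - t) * Cmod b ^ 2 + - (1 / t - 1) * Cmod (a - b)%C ^ 2 <= Cmod a ^ 2.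
Proof.
  intros Ht Ht1.
  set (x := Cmod b). set (y := Cmod (a - b)%C). set (z := Cmod a).
  assert (H1 : x <= z + y).
  { unfold x, y, z. replace b with (a + - (a - b))%C at 1 by ring. eapply Rle_trans. apply Cmod_triangle. rewrite Cmod_opp. lra. }
  assert (H2 : y <= z + x).
  { unfold x, y, z. eapply Rle_trans. apply Cmod_triangle. rewrite Cmod_opp. lra. }
  assert (Hz : 0 <= z) by apply Cmod_ge_0.
  assert (H3 : (x - y) ^ 2 <= z ^ 2) by nra.
  set (s := 1 / t). assert (Hs : t * s = 1) by (unfold s; field; lra). assert (0 < s) by (unfold s; apply Rdiv_lt_0_compat; lra).
  assert (0 <= s * (t * x - y) ^ 2) by (apply Rmult_le_pos; [lra | apply pow2_ge_0]).
  assert (s * (t * x - y) ^ 2 = t * x ^ 2 - 2 * x * y + s * y ^ 2).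
  { replace (s * (t * x - y) ^ 2) with ((t * s) * t * x ^ 2 - 2 * (t * s) * x * y + s * y ^ 2) by ring. rewrite Hs. ring. }
  nra.
Qed.

Theorem lemma2 (p q : nat) (alpha : nat -> C) (S : nat -> bool)
    (delta r c : R) :
  (0 < p)%nat -> (p < q)%nat ->
  norm2 p alpha = 1 ->
  0 < delta -> delta <= 1 -> 0 < r ->
  delta_uniform p delta (restrict (FT p p alpha) S) ->
  (norm2 p (restrict (FT p p alpha) S)) ^ 2 = c ->
  INR q > (3200 * r * ln (INR p) / (delta * sqrt c)) * INR p ->
  (norm2 q (restrict (FT p q alpha) (image_set p q S))) ^ 2
    >= INR p / INR q * delta ^ 2 * (1 - 1 / (100 * r)) * c.
Proof.
  intros Hp Hq Hal Hd0 Hd1 Hr _ Hc Hqbig.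
  assert (HP : 0 < INR p) by (apply lt_0_INR; auto).
  assert (HQ : 0 < INR q) by (apply lt_0_INR; lia).
  assert (HPQ : INR p < INR q) by (apply lt_INR; auto).
  assert (Ha : rsum (fun k => Cmod (alpha k) ^ 2) p = 1).
  { unfold norm2 in Hal. rewrite <- (pow2_sqrt (rsum _ p)). rewrite Hal; ring.
    apply rsum_nonneg; intros; apply pow2_ge_0. }
  set (U := fun i => h p q alpha i ((q * i) mod p)).
  set (B := fun i => h p q alpha i 0).
  assert (Hc' : c = rsum (fun i => if S i then Cmod (B i) ^ 2 else 0) p).
  { rewrite <- Hc. unfold norm2. rewrite pow2_sqrt by (apply rsum_nonneg; intros; apply pow2_ge_0).
    apply rsum_ext. intros i Hi. unfold restrict, B. rewrite (beta_h p q). destruct (S i); auto.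
    rewrite Cmod_0. ring. }
  set (T := rsum (fun i => if S i then Cmod (U i) ^ 2 else 0) p).
  set (e2 := rsum (fun i => Cmod (U i - B i)%C ^ 2) p).
  assert (Hc0 : 0 <= c) by (rewrite Hc'; apply rsum_nonneg; intros; destruct (S i); [apply pow2_ge_0 | lra]).
  assert (He2 : e2 <= ((INR p - 1) * (2 * PI / INR q)) ^ 2) by (apply stepD; auto).
  assert (He0 : 0 <= e2) by (apply rsum_nonneg; intros; apply pow2_ge_0).
  assert (HT : forall t, 0 < t -> t <= 1 -> (1 - t) * c + - (1 / t - 1) * e2 <= T).
  { intros t Ht Ht1. rewrite Hc'. unfold e2, T. rewrite <- !rsum_scal, <- rsum_plus. apply rsum_le.
    intros i Hi. destruct (S i). apply pt; auto.
    assert (1 <= 1 / t). { apply (Rmult_le_reg_l t); auto. replace (t * (1 / t)) with 1 by (field; lra). lra. }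
    pose proof (pow2_ge_0 (Cmod (U i - B i)%C)). nra. }
  assert (Hlhs : INR p / INR q * T <= (norm2 q (restrict (FT p q alpha) (image_set p q S))) ^ 2).
  { unfold norm2. rewrite pow2_sqrt by (apply rsum_nonneg; intros; apply pow2_ge_0).
    eapply Rle_trans; [| apply (reindex (fun j => Cmod (restrict (FT p q alpha) (image_set p q S) j) ^ 2) (prime_idx p q))].
    - unfold T. rewrite <- rsum_scal. apply rsum_le. intros i Hi. unfold restrict.
      destruct (S i) eqn:HS.
      + rewrite image_set_true by auto. unfold FT, U, h. rewrite <- X_h by lia.
        rewrite !Cmod_sq_scal.
        rewrite <- !Rinv_pow by (apply Rgt_not_eq, sqrt_lt_R0; auto). rewrite !pow2_sqrt by lra.
        apply Req_le. field. lra.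
      + rewrite Rmult_0_r. apply pow2_ge_0.
    - intros; apply pow2_ge_0.
    - intros; apply prime_idx_mono; lia.
    - intros; apply prime_idx_lt; lia. }
  apply Rle_ge. 
  assert (Hpq0 : 0 < INR p / INR q) by (apply Rdiv_lt_0_compat; auto).
  destruct (Rle_dec (1 - 1 / (100 * r)) 0) as [HK|HK].
  { apply Rle_trans with 0.
    - assert (0 <= delta ^ 2) by apply pow2_ge_0.
      assert (0 <= INR p / INR q * delta ^ 2) by (apply Rmult_le_pos; lra).
      assert (INR p / INR q * delta ^ 2 * (1 - 1 / (100 * r)) <= 0) by (apply Rmult_le_0_l; lra). nra.
    - eapply Rle_trans; [| apply Hlhs]. apply Rmult_le_pos; [lra|].
      unfold T. apply rsum_nonneg; intros; destruct (S i); [apply pow2_ge_0 | lra]. }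
  apply Rnot_le_lt in HK.
  destruct (Req_dec c 0) as [Hcz|Hcz].
  { rewrite Hcz, Rmult_0_r. eapply Rle_trans; [| apply Hlhs]. apply Rmult_le_pos; [lra|].
      unfold T. apply rsum_nonneg; intros; destruct (S i); [apply pow2_ge_0 | lra]. }
  assert (Hcp : 0 < c) by lra.
  assert (Hr100 : 1 / 100 < r).
  { assert (1 / (100 * r) < 1) by lra. apply Rnot_le_lt. intro Hle.
    assert (1 <= 1 / (100 * r)). { unfold Rdiv. rewrite Rmult_1_l. rewrite <- Rinv_1 at 1. apply Rinv_le_contravar; lra. } lra. }
  set (t := 1 / (200 * r)).
  assert (Ht0 : 0 < t) by (unfold t; apply Rdiv_lt_0_compat; lra).
  assert (Ht1 : t <= 1 / 2).
  { unfold t. unfold Rdiv. rewrite !Rmult_1_l. apply Rinv_le_contravar; lra. }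
  assert (HK2 : 1 - 1 / (100 * r) = 1 - 2 * t) by (unfold t; field; lra).
  assert (Hsc : 0 < sqrt c) by (apply sqrt_lt_R0; auto).
  assert (Heps : (INR p - 1) * (2 * PI / INR q) <= t * sqrt c).
  { destruct (Nat.eq_dec p 1) as [H1|H1].
    - subst. replace (INR 1 - 1) with 0 by (simpl; ring). rewrite Rmult_0_l. apply Rmult_le_pos; lra.
    - assert (Hp2 : 2 <= INR p) by (replace 2 with (INR 2) by (simpl; ring); apply le_INR; lia).
      assert (Hln : / 2 < ln (INR p)).
      { eapply Rlt_le_trans. apply ln_lt_2. destruct (Req_dec (INR p) 2) as [E2|E2]. rewrite E2; lra.
        apply Rlt_le, ln_increasing; lra. }
      assert (Hds : 0 < delta * sqrt c) by nra.
      assert (Hq2 : INR q * (delta * sqrt c) > 3200 * r * ln (INR p) * INR p).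
      { replace (3200 * r * ln (INR p) * INR p) with ((3200 * r * ln (INR p) / (delta * sqrt c)) * INR p * (delta * sqrt c)) by (field; lra).
        apply Rmult_gt_compat_r; auto. }
      assert (Hq3 : INR q * sqrt c >= INR q * (delta * sqrt c)) by (pose proof (Rmult_le_pos (INR q * sqrt c) (1 - delta) ltac:(nra) ltac:(lra)); nra).
      pose proof PI_4. pose proof PI_RGT_0.
      assert (Hq5 : 1600 * r * INR p <= 3200 * r * ln (INR p) * INR p).
      { assert (0 < r * INR p) by nra. nra. }
      assert (Hq6 : 400 * PI * r * (INR p - 1) <= 1600 * r * INR p).
      { assert (0 <= r * (INR p - 1)) by nra. nra. }
      assert (Hq4 : 400 * PI * r * (INR p - 1) <= INR q * sqrt c) by lra.
      unfold t. apply (Rmult_le_reg_r (200 * r * INR q)). nra.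
      replace ((INR p - 1) * (2 * PI / INR q) * (200 * r * INR q)) with (400 * PI * r * (INR p - 1)) by (field; lra).
      replace (1 / (200 * r) * sqrt c * (200 * r * INR q)) with (INR q * sqrt c) by (field; lra). lra. }
  assert (He2' : e2 <= t ^ 2 * c).
  { eapply Rle_trans. apply He2. replace (t ^ 2 * c) with ((t * sqrt c) ^ 2) by (rewrite Rpow_mult_distr, pow2_sqrt; lra).
    apply pow_incr. split; auto.
    assert (0 <= INR p - 1) by (replace 1 with (INR 1) by auto; rewrite <- minus_INR by lia; apply pos_INR).
    pose proof PI_RGT_0. apply Rmult_le_pos; auto. apply Rlt_le, Rdiv_lt_0_compat; lra. }
  assert (HTc : (1 - 2 * t) * c <= T).
  { eapply Rle_trans; [| apply (HT t); lra].
    assert (1 / t * e2 <= t * c).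
    { apply (Rmult_le_reg_l t); auto. replace (t * (1 / t * e2)) with e2 by (field; lra). nra. }
    nra. }
  rewrite HK2. eapply Rle_trans; [| apply Hlhs].
  assert (Hd2 : delta ^ 2 <= 1) by nra.
  assert (0 < 1 - 2 * t) by (rewrite <- HK2; lra).
  assert (Hx : 0 < (1 - 2 * t) * c) by (apply Rmult_lt_0_compat; lra).
  assert (delta ^ 2 * ((1 - 2 * t) * c) <= (1 - 2 * t) * c).
  { rewrite <- (Rmult_1_l ((1 - 2 * t) * c)) at 2. apply Rmult_le_compat_r; lra. }
  replace (INR p / INR q * delta ^ 2 * (1 - 2 * t) * c) with (INR p / INR q * (delta ^ 2 * ((1 - 2 * t) * c))) by ring.
  apply Rmult_le_compat_l; lra.
Qed.
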